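(* Let $\mathcal F$ be the set of free superintegrable systems on the complex Euclidean plane, i.e. of $3$-dimensional linear subspaces $W$ of the space of Killing tensors with $g\in W$. For $W\in\mathcal F$ let $P_W:=\{L\in S^2_0:\ L-(\operatorname{tr}L)g\in W\}$. Then $W\mapsto P_W$ is a bijection from $\mathcal F$ onto the Grassmannian $G_2(S^2_0)$ of $2$-planes in the $5$-dimensional space $S^2_0$, and composing with the Plücker map $\operatorname{span}\{L^1,L^2\}\mapsto(a_{ij})\in\mathbb P^9$ identifies $\mathcal F$ with the $6$-dimensional projective variety of skew-symmetric $5\times5$ matrices $$\begin{bmatrix}0&a_{30}&a_{20}&a_{10}&a_{00}\\-a_{30}&0&a_{21}&a_{11}&a_{01}\\-a_{20}&-a_{21}&0&a_{12}&a_{02}\\-a_{10}&-a_{11}&-a_{12}&0&a_{03}\\-a_{00}&-a_{01}&-a_{02}&-a_{03}&0\end{bmatrix}$$ of rank two (up to scalar), i.e. with the subvariety of $\mathbb P^9$ defined by the Plücker relations $a_{03}a_{21}-a_{02}a_{11}+a_{01}a_{12}=0$, $a_{03}a_{20}-a_{02}a_{10}+a_{00}a_{12}=0$, $a_{03}a_{30}-a_{01}a_{10}+a_{00}a_{11}=0$, $a_{02}a_{30}-a_{01}a_{20}+a_{00}a_{21}=0$, $a_{12}a_{30}-a_{11}a_{20}+a_{10}a_{21}=0$.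
   Context: Work on the complex Euclidean plane $\mathbb C^2$ with null coordinates $(z,w)$ and the flat holomorphic metric $g$ with $g_{zz}=g_{ww}=0$, $g_{zw}=g_{wz}=1$. A Killing tensor is a symmetric tensor field $K$ with $K_{ij,k}+K_{jk,i}+K_{ki,j}=0$; a special conformal Killing tensor (SCKT) is a symmetric tensor field $L$ with $L_{ij,k}=\tfrac12(\lambda_ig_{jk}+\lambda_jg_{ik})$, $\lambda=\operatorname{tr}L=g^{ij}L_{ij}$, $\lambda_i=\partial_i\lambda$. On this plane the SCKTs are exactly the tensors with components $L_{zz}=A_{zz}+2b_zw+cw^2$, $L_{ww}=A_{ww}+2b_wz+cz^2$, $L_{zw}=A_{zw}+b_zz+b_ww+czw$ for complex constants $A_{zz},A_{zw},A_{ww},b_z,b_w,c$, and $L\mapsto L-(\operatorname{tr}L)g$ is a linear isomorphism from SCKTs onto Killing tensors sending $g$ to $-g$. Let $S^2_0$ be the $5$-dimensional space of SCKTs with $A_{zw}=0$. For $L^1,L^2\in S^2_0$ (with parameters carrying superscripts $1,2$) the Plücker coordinates of $\operatorname{span}\{L^1,L^2\}$ are $a_{30}=2(A^1_{zz}b^2_z-b^1_zA^2_{zz})$, $a_{20}=A^1_{zz}c^2-c^1A^2_{zz}$, $a_{10}=2(A^1_{zz}b^2_w-b^1_wA^2_{zz})$, $a_{00}=A^1_{zz}A^2_{ww}-A^1_{ww}A^2_{zz}$, $a_{21}=2(b^1_zc^2-c^1b^2_z)$, $a_{11}=4(b^1_zb^2_w-b^1_wb^2_z)$, $a_{01}=2(b^1_zA^2_{ww}-A^1_{ww}b^2_z)$,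 $a_{12}=2(c^1b^2_w-b^1_wc^2)$, $a_{02}=c^1A^2_{ww}-A^1_{ww}c^2$, $a_{03}=2(b^1_wA^2_{ww}-A^1_{ww}b^2_w)$, regarded as a point of $\mathbb P^9$. *)

(* Defs.v *)
From HB Require Import structures.
From mathcomp Require Import all_boot all_order all_algebra.
Set Implicit Arguments. Unset Strict Implicit. Unset Printing Implicit Defensive.
Import Order.TTheory GRing.Theory Num.Theory.
Local Open Scope ring_scope.

(* Symmetric 2-tensor fields on the plane F^2 (F = C in the theorem), written
   in null coordinates (z,w); index 0 = z, index 1 = w.
   [T i j z w] is the component T_{ij} at the point (z,w). *)
Definition field (F : fieldType) := 'I_2 -> 'I_2 -> F -> F -> F.

Section Defs.
Variable F : fieldType.

Definition iz : 'I_2 := ord0.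
Definition iw : 'I_2 := ord_max.

Definition gmet : field F := fun i j _ _ => if i == j then 0 else 1.
Definition ginv (i j : 'I_2) : F := if i == j then 0 else 1.

Definition symmetric (T : field F) := forall i j z w, T i j z w = T j i z w.

Definition trace (L : field F) (z w : F) : F :=
  \sum_(i < 2) \sum_(j < 2) ginv i j * L i j z w.

Definition fzero : field F := fun _ _ _ _ => 0.
Definition lcomb n (Ks : 'I_n -> field F) (a : 'I_n -> F) : field F :=
  fun i j z w => \sum_(k < n) a k * Ks k i j z w.
Definition span n (Ks : 'I_n -> field F) (K : field F) :=
  exists a : 'I_n -> F, K = lcomb Ks a.
Definition lin_indep n (Ks : 'I_n -> field F) :=
  forall a : 'I_n -> F, lcomb Ks a = fzero -> forall k, a k = 0.
Definition is_basis n (V : field F -> Prop) (Ks : 'I_n -> field F) :=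
  lin_indep Ks /\ (forall K, V K <-> span Ks K).
Definition has_dim (V : field F -> Prop) n :=
  exists Ks : 'I_n -> field F, is_basis V Ks.

Definition pair_fam (L1 L2 : field F) : 'I_2 -> field F :=
  fun k => if val k == 0%N then L1 else L2.

Definition sckt (Azz Azw Aww bz bw c : F) : field F :=
  fun i j z w =>
    if (i == iz) && (j == iz) then Azz + 2 * bz * w + c * w ^+ 2
    else if (i == iw) && (j == iw) then Aww + 2 * bw * z + c * z ^+ 2
    else Azw + bz * z + bw * w + c * z * w.

(* Special conformal Killing tensors (by the classification on the plane). *)
Definition is_SCKT (L : field F) :=
  exists Azz Azw Aww bz bw c, L = sckt Azz Azw Aww bz bw c.

Definition to_killing (L : field F) : field F :=
  fun i j z w => L i j z w - trace L z w * gmet i j z w.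

Definition is_Killing (K : field F) :=
  exists L, is_SCKT L /\ K = to_killing L.

Definition in_S20 (L : field F) :=
  exists Azz Aww bz bw c, L = sckt Azz 0 Aww bz bw c.

Record prm := Prm { pAzz : F; pAww : F; pbz : F; pbw : F; pc : F }.
Definition toS20 (p : prm) : field F := sckt (pAzz p) 0 (pAww p) (pbz p) (pbw p) (pc p).

Definition free_superint (W : field F -> Prop) :=
  has_dim W 3 /\ (forall K, W K -> is_Killing K) /\ W gmet.

Definition PW (W : field F -> Prop) (L : field F) := in_S20 L /\ W (to_killing L).

Definition plane_in_S20 (P : field F -> Prop) :=
  has_dim P 2 /\ (forall L, P L -> in_S20 L).

Record pl := Pl { a30 : F; a20 : F; a10 : F; a00 : F; a21 : F;
                  a11 : F; a01 : F; a12 : F; a02 : F; a03 : F }.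

Definition plucker (p1 p2 : prm) : pl :=
  Pl (2 * (pAzz p1 * pbz p2 - pbz p1 * pAzz p2))
     (pAzz p1 * pc p2 - pc p1 * pAzz p2)
     (2 * (pAzz p1 * pbw p2 - pbw p1 * pAzz p2))
     (pAzz p1 * pAww p2 - pAww p1 * pAzz p2)
     (2 * (pbz p1 * pc p2 - pc p1 * pbz p2))
     (4 * (pbz p1 * pbw p2 - pbw p1 * pbz p2))
     (2 * (pbz p1 * pAww p2 - pAww p1 * pbz p2))
     (2 * (pc p1 * pbw p2 - pbw p1 * pc p2))
     (pc p1 * pAww p2 - pAww p1 * pc p2)
     (2 * (pbw p1 * pAww p2 - pAww p1 * pbw p2)).

Definition pl_coords (a : pl) : seq F :=
  [:: a30 a; a20 a; a10 a; a00 a; a21 a; a11 a; a01 a; a12 a; a02 a; a03 a].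

Definition pl_nonzero (a : pl) := exists2 x, x \in pl_coords a & x != 0.

Definition pl_proj_eq (a b : pl) :=
  exists2 k : F, k != 0 & pl_coords a = map (fun x => k * x) (pl_coords b).

Definition plucker_rel (a : pl) :=
  [/\ a03 a * a21 a - a02 a * a11 a + a01 a * a12 a = 0,
      a03 a * a20 a - a02 a * a10 a + a00 a * a12 a = 0,
      a03 a * a30 a - a01 a * a10 a + a00 a * a11 a = 0,
      a02 a * a30 a - a01 a * a20 a + a00 a * a21 a = 0 &
      a12 a * a30 a - a11 a * a20 a + a10 a * a21 a = 0].

Definition skew_rows (a : pl) : seq (seq F) :=
  [:: [:: 0; a30 a; a20 a; a10 a; a00 a];
      [:: - a30 a; 0; a21 a; a11 a; a01 a];
      [:: - a20 a; - a21 a; 0; a12 a; a02 a];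
      [:: - a10 a; - a11 a; - a12 a; 0; a03 a];
      [:: - a00 a; - a01 a; - a02 a; - a03 a; 0]].

Definition skewM (a : pl) : 'M[F]_5 :=
  \matrix_(i < 5, j < 5) nth 0 (nth [::] (skew_rows a) i) j.

Definition PW_basis (W : field F -> Prop) (p1 p2 : prm) :=
  is_basis (PW W) (pair_fam (toS20 p1) (toS20 p2)).

End Defs.

(* Main.v *)
Require Import Defs.
From HB Require Import structures.
From mathcomp Require Import all_boot all_order all_algebra.
From mathcomp Require Import reals complex.
From mathcomp Require Import ring.
From Stdlib Require Import FunctionalExtensionality.
Import Order.TTheory GRing.Theory Num.Theory.
Local Open Scope ring_scope.
Set Implicit Arguments. Unset Strict Implicit.

Lemma eq0_of (F : fieldType) (e1 e2 : F) : e1 = e2 -> e1 - e2 = 0.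
Proof. by move=> ->; rewrite subrr. Qed.
Tactic Notation "from_eq" constr(h) uconstr(c) := match type of h with ?e1 = ?e2 =>
  apply/eqP; rewrite -subr_eq0; apply/eqP;
  transitivity ((e1 - e2) * c); [ring | by rewrite (eq0_of h) mul0r] end.

Section Basics.
Variable F : fieldType.
Implicit Types (K L A B : field F) (x y : F).

Definition lin2 x A y B : field F := fun i j z w => x * A i j z w + y * B i j z w.

Lemma fext K1 K2 : (forall i j z w, K1 i j z w = K2 i j z w) -> K1 = K2.
Proof.
move=> H; apply: functional_extensionality => i; apply: functional_extensionality => j.
apply: functional_extensionality => z; apply: functional_extensionality => w; exact: H.
Qed.

Lemma ord2P (i : 'I_2) : i = iz \/ i = iw.
Proof. case: i => [[|[|//]] Hi]; [left|right]; exact: val_inj. Qed.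

Lemma traceE L z w : trace L z w = L iz iw z w + L iw iz z w.
Proof.
have E : lift ord0 ord0 = iw :> 'I_2 by apply: val_inj.
rewrite /trace !big_ord_recl !big_ord0 /ginv /= E /iz; ring.
Qed.

Lemma lcomb2E (Ks : 'I_2 -> field F) a i j z w :
  lcomb Ks a i j z w = a ord0 * Ks ord0 i j z w + a ord_max * Ks ord_max i j z w.
Proof.
have E : lift ord0 ord0 = ord_max :> 'I_2 by apply: val_inj.
by rewrite /lcomb !big_ord_recl big_ord0 addr0 E.
Qed.

Lemma lcomb_pair L1 L2 a : lcomb (pair_fam L1 L2) a = lin2 (a ord0) L1 (a ord_max) L2.
Proof. apply: fext => i j z w; by rewrite lcomb2E /pair_fam /lin2. Qed.

Lemma TK_lin x L1 y L2 : to_killing (lin2 x L1 y L2) = lin2 x (to_killing L1) y (to_killing L2).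
Proof. apply: fext => i j z w; rewrite /to_killing /lin2 !traceE /=; ring. Qed.

Lemma TK_inj L1 L2 : to_killing L1 = to_killing L2 -> L1 = L2.
Proof.
move=> H; apply: fext => i j z w.
have E := fun i j => congr1 (fun K => K i j z w) H.
move: (E iz iz) (E iw iw) (E iz iw) (E iw iz).
rewrite /to_killing !traceE /gmet /= => h1 h2 h3 h4.
case: (ord2P i) => ->; case: (ord2P j) => ->.
- from_eq h1 1.
- from_eq h4 (-1).
- from_eq h3 (-1).
- from_eq h2 1.
Qed.

Ltac pw := let i := fresh "i" in let j := fresh "j" in let z := fresh "z" in let w := fresh "w" in
  apply: fext => i j z w; case: (ord2P i) => ->; case: (ord2P j) => ->;
  rewrite /lin2 /to_killing ?traceE /toS20 /sckt /gmet /fzero /=; ring.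

Lemma TKg Azz Azw Aww bz bw c :
  to_killing (sckt Azz 0 Aww bz bw c) = lin2 1 (to_killing (sckt Azz Azw Aww bz bw c)) Azw (@gmet F).
Proof. pw. Qed.

Lemma gmetK : @gmet F = to_killing (sckt 0 (-1) 0 0 0 0).
Proof. pw. Qed.

Definition pcomb x (p : prm F) y (q : prm F) : prm F :=
  Prm (x * pAzz p + y * pAzz q) (x * pAww p + y * pAww q) (x * pbz p + y * pbz q)
      (x * pbw p + y * pbw q) (x * pc p + y * pc q).

Lemma toS20_comb x (p : prm F) y (q : prm F) : lin2 x (toS20 p) y (toS20 q) = toS20 (pcomb x p y q).
Proof. pw. Qed.

Lemma toS20_inj (p q : prm F) : toS20 p = toS20 q -> p = q.
Proof.
case: p => a1 a2 a3 a4 a5; case: q => b1 b2 b3 b4 b5 H.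
have E := fun i j z w => congr1 (fun K => K i j z w) H.
move: (E iz iz 0 0) (E iw iw 0 0) (E iz iw 1 0) (E iz iw 0 1) (E iz iw 1 1).
rewrite /toS20 /sckt /= => h1 h2 h3 h4 h5.
have e1 : a1 = b1 by from_eq h1 1.
have e2 : a2 = b2 by from_eq h2 1.
have e3 : a3 = b3 by from_eq h3 1.
have e4 : a4 = b4 by from_eq h4 1.
have e5 : a5 = b5 by move: h5; rewrite e3 e4 => h5; from_eq h5 1.
by rewrite e1 e2 e3 e4 e5.
Qed.

Lemma in_S20P L : in_S20 L -> exists p, L = toS20 p.
Proof. by case=> a [b [c [d [e ->]]]]; exists (Prm a b c d e). Qed.

Lemma in_S20_toS20 (p : prm F) : in_S20 (toS20 p).
Proof. by exists (pAzz p), (pAww p), (pbz p), (pbw p), (pc p). Qed.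

Lemma TKS20_zw (p : prm F) : to_killing (toS20 p) iz iw 0 0 = 0.
Proof. rewrite /to_killing traceE /toS20 /sckt /gmet /=; ring. Qed.

Lemma gmet_zw : @gmet F iz iw 0 0 = 1.
Proof. by []. Qed.

Definition vec (p : prm F) (i : 'I_5) : F :=
  nth 0 [:: pAzz p; 2 * pbz p; pc p; 2 * pbw p; pAww p] i.

Lemma vec_comb x (p : prm F) y (q : prm F) i : vec (pcomb x p y q) i = x * vec p i + y * vec q i.
Proof. case: i => [[|[|[|[|[|//]]]]] Hi]; rewrite /vec /=; ring. Qed.

Lemma skewM_pl (p1 p2 : prm F) i j :
  skewM (plucker p1 p2) i j = vec p1 i * vec p2 j - vec p1 j * vec p2 i.
Proof.
rewrite /skewM mxE.
case: i => [[|[|[|[|[|//]]]]] Hi]; case: j => [[|[|[|[|[|//]]]]] Hj]; rewrite /vec /=; ring.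
Qed.

Lemma skewM_proj (a b : pl F) k : pl_coords a = map (fun x => k * x) (pl_coords b) ->
  forall i j, skewM a i j = k * skewM b i j.
Proof.
case: a => a1 a2 a3 a4 a5 a6 a7 a8 a9 a10; case: b => b1 b2 b3 b4 b5 b6 b7 b8 b9 b10.
rewrite /pl_coords /= => [[-> -> -> -> -> -> -> -> -> ->]] i j.
rewrite /skewM !mxE.
case: i => [[|[|[|[|[|//]]]]] Hi]; case: j => [[|[|[|[|[|//]]]]] Hj]; rewrite /=; ring.
Qed.

Lemma skewM_cases (a : pl F) i j :
  [\/ skewM a i j = 0, skewM a i j \in pl_coords a | - skewM a i j \in pl_coords a].
Proof.
rewrite /skewM mxE /pl_coords.
case: i => [[|[|[|[|[|//]]]]] Hi]; case: j => [[|[|[|[|[|//]]]]] Hj]; rewrite /=;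
  first [by apply: Or31 | by apply: Or32; rewrite !inE eqxx ?orbT
        | by apply: Or33; rewrite opprK !inE eqxx ?orbT].
Qed.

Definition o5 (n : nat) : 'I_5 := inord n.

Lemma coords_skew (a : pl F) : pl_coords a =
  [:: skewM a (o5 0) (o5 1); skewM a (o5 0) (o5 2); skewM a (o5 0) (o5 3); skewM a (o5 0) (o5 4);
      skewM a (o5 1) (o5 2); skewM a (o5 1) (o5 3); skewM a (o5 1) (o5 4);
      skewM a (o5 2) (o5 3); skewM a (o5 2) (o5 4); skewM a (o5 3) (o5 4)].
Proof. by rewrite /skewM !mxE /o5 !inordK. Qed.

Lemma pl_nonzeroP (a : pl F) : pl_nonzero a <-> exists i j, skewM a i j != 0.
Proof.
split.
- case=> x; rewrite coords_skew !inE.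
  do 9 (case/orP; first by move/eqP=> -> H; do 2 eexists; exact: H).
  by move/eqP=> -> H; do 2 eexists; exact: H.
- case=> i [j H]; case: (skewM_cases a i j) => E.
  + by rewrite E eqxx in H.
  + by exists (skewM a i j).
  + by exists (- skewM a i j); rewrite ?oppr_eq0.
Qed.
End Basics.

Ltac pw := let i := fresh "i" in let j := fresh "j" in let z := fresh "z" in let w := fresh "w" in
  apply: fext => i j z w; case: (ord2P i) => ->; case: (ord2P j) => ->;
  rewrite /lin2 /to_killing ?traceE /toS20 /sckt /gmet /fzero /=; ring.

Section H2.
Variable F : fieldType.
Hypothesis h2 : (2 : F) != 0.

Definition mk2 (x y : F) : 'I_2 -> F := fun k => if val k == 0%N then x else y.

Lemma vec_inj (p q : prm F) : (forall i, vec p i = vec q i) -> p = q.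
Proof.
case: p => a1 a2 a3 a4 a5; case: q => b1 b2 b3 b4 b5 H.
move: (H (o5 0)) (H (o5 1)) (H (o5 2)) (H (o5 3)) (H (o5 4)).
rewrite /vec /o5 !inordK //= => -> h3 -> h4 ->.
have e3 : a3 = b3.
  by apply/eqP; rewrite -subr_eq0; apply/eqP; apply: (mulfI h2); rewrite mulr0 mulrBr h3 subrr.
have e4 : a4 = b4.
  by apply/eqP; rewrite -subr_eq0; apply/eqP; apply: (mulfI h2); rewrite mulr0 mulrBr h4 subrr.
by rewrite e3 e4.
Qed.

Definition prm_of (v : 'I_5 -> F) : prm F :=
  Prm (v (o5 0)) (v (o5 4)) (v (o5 1) / 2) (v (o5 3) / 2) (v (o5 2)).

Lemma vec_prm_of v i : vec (prm_of v) i = v i.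
Proof.
have E k (Hk : (k < 5)%N) : Ordinal Hk = o5 k by apply: val_inj; rewrite /= inordK.
case: i => [[|[|[|[|[|//]]]]] Hi]; rewrite /vec /prm_of /= E //.
- by rewrite mulrC divfK.
- by rewrite mulrC divfK.
Qed.

Definition p0 : prm F := Prm 0 0 0 0 0.

Lemma toS20_p0 : toS20 p0 = @fzero F.
Proof. pw. Qed.

Lemma vec0_toS20 (p : prm F) : (forall i, vec p i = 0) -> toS20 p = @fzero F.
Proof.
move=> H; rewrite -toS20_p0; congr toS20; apply: vec_inj => i.
rewrite H; case: i => [[|[|[|[|[|//]]]]] Hi]; rewrite /vec /=; ring.
Qed.

Lemma toS20_0 (p : prm F) : toS20 p = @fzero F -> forall i, vec p i = 0.
Proof.
rewrite -toS20_p0 => /toS20_inj -> i.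
case: i => [[|[|[|[|[|//]]]]] Hi]; rewrite /vec /=; ring.
Qed.

Lemma lcomb_mk2 (L1 L2 : field F) x y : lcomb (pair_fam L1 L2) (mk2 x y) = lin2 x L1 y L2.
Proof. by rewrite lcomb_pair. Qed.

Lemma indep_of_pl (p1 p2 : prm F) :
  pl_nonzero (plucker p1 p2) -> lin_indep (pair_fam (toS20 p1) (toS20 p2)).
Proof.
case/pl_nonzeroP=> i [j]; rewrite skewM_pl => Hm a.
rewrite lcomb_pair toS20_comb => /toS20_0 H.
have Hl l : a ord0 * vec p1 l = - (a ord_max * vec p2 l).
  by apply/eqP; rewrite -subr_eq0 opprK; apply/eqP; rewrite -(H l) vec_comb.
have A0 : a ord0 = 0.
  have : a ord0 * (vec p1 i * vec p2 j - vec p1 j * vec p2 i) = 0.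
    by rewrite mulrBr !mulrA !Hl; ring.
  by move/eqP; rewrite mulf_eq0 (negbTE Hm) orbF => /eqP.
have Hl2 l : a ord_max * vec p2 l = 0.
  by move: (Hl l); rewrite A0 mul0r => /eqP; rewrite eq_sym oppr_eq0 => /eqP.
have A1 : a ord_max = 0.
  have : a ord_max * (vec p1 i * vec p2 j - vec p1 j * vec p2 i) = 0.
    by rewrite mulrBr (mulrC (vec p1 i)) (mulrC (vec p1 j)) !mulrA !Hl2; ring.
  by move/eqP; rewrite mulf_eq0 (negbTE Hm) orbF => /eqP.
move=> k; case: (ord2P k) => ->; [exact: A0 | exact: A1].
Qed.

Lemma pl_of_indep (p1 p2 : prm F) :
  lin_indep (pair_fam (toS20 p1) (toS20 p2)) -> pl_nonzero (plucker p1 p2).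
Proof.
move=> Hi; apply/pl_nonzeroP.
case: (boolP [exists i, [exists j, skewM (plucker p1 p2) i j != 0]]).
  by case/existsP=> i /existsP [j H]; exists i, j.
rewrite negb_exists => /forallP Hall.
have Hm i j : vec p1 i * vec p2 j - vec p1 j * vec p2 i = 0.
  by move: (Hall i); rewrite negb_exists => /forallP/(_ j); rewrite negbK skewM_pl => /eqP.
exfalso; case: (boolP [exists i, vec p1 i != 0]).
- case/existsP=> i Hv.
  have := Hi (mk2 (vec p2 i) (- vec p1 i)).
  rewrite lcomb_mk2 toS20_comb vec0_toS20.
  + by move/(_ erefl ord_max) => /= /eqP; rewrite oppr_eq0; apply/negP.
  + move=> l; rewrite vec_comb; from_eq (Hm i l) (-1).
- rewrite negb_exists => /forallP Hv0.
  have := Hi (mk2 1 0); rewrite lcomb_mk2 toS20_comb vec0_toS20.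
  + by move/(_ erefl ord0) => /= /eqP; rewrite oner_eq0.
  + by move=> l; rewrite vec_comb; move: (Hv0 l); rewrite negbK => /eqP ->; ring.
Qed.
End H2.

Section Lin.
Variable F : fieldType.
Lemma Lspan (v u x : 'I_5 -> F) i j : v i * u j - v j * u i != 0 ->
  (forall l, x i * (v j * u l - v l * u j) - x j * (v i * u l - v l * u i)
             + x l * (v i * u j - v j * u i) = 0) ->
  forall l, x l = (x i * u j - x j * u i) / (v i * u j - v j * u i) * v l
                + (x j * v i - x i * v j) / (v i * u j - v j * u i) * u l.
Proof.
move=> Hm H l.
have E : x l * (v i * u j - v j * u i) = (x i * u j - x j * u i) * v l + (x j * v i - x i * v j) * u l.
  from_eq (H l) 1.
rewrite -[x l](mulfK Hm) E; field.
exact: Hm.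
Qed.
End Lin.

Section P.
Variable F : fieldType.
Definition Pf (a : pl F) i j k l := skewM a i j * skewM a k l - skewM a i k * skewM a j l + skewM a i l * skewM a j k.

Tactic Notation "uz" constr(h) uconstr(c) := match type of h with ?e1 = 0 =>
  transitivity (e1 * c); [ring | by rewrite h mul0r] end.

Lemma Pf0 (a : pl F) : plucker_rel a -> forall i j k l, Pf a i j k l = 0.
Proof.
case: a => a1 a2 a3 a4 a5 a6 a7 a8 a9 a10 [] /= H1 H2 H3 H4 H5 i j k l.
rewrite /Pf /skewM !mxE.
case: i => [[|[|[|[|[|//]]]]] Hi]; case: j => [[|[|[|[|[|//]]]]] Hj];
case: k => [[|[|[|[|[|//]]]]] Hk]; case: l => [[|[|[|[|[|//]]]]] Hl]; rewrite /=;
first [ring | uz H1 1 | uz H1 (-1) | uz H2 1 | uz H2 (-1) | uz H3 1 | uz H3 (-1)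
      | uz H4 1 | uz H4 (-1) | uz H5 1 | uz H5 (-1)].
Qed.
End P.

Section R.
Variable F : fieldType.
Implicit Types a : pl F.

Lemma skew_anti a i j : skewM a j i = - skewM a i j.
Proof.
rewrite /skewM !mxE.
case: i => [[|[|[|[|[|//]]]]] Hi]; case: j => [[|[|[|[|[|//]]]]] Hj]; rewrite /=; ring.
Qed.

Lemma skew_diag a i : skewM a i i = 0.
Proof. by rewrite /skewM !mxE; case: i => [[|[|[|[|[|//]]]]] Hi]. Qed.

Lemma rel_of_decomp a (c d : 'I_5 -> F) :
  (forall l m, skewM a l m = c l * d m - d l * c m) -> plucker_rel a.
Proof.
move=> H; have := coords_skew a.
case: a H => a1 a2 a3 a4 a5 a6 a7 a8 a9 a10 H.
rewrite /pl_coords !H => [[-> -> -> -> -> -> -> -> -> ->]].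
split; rewrite /=; ring.
Qed.

Lemma decomp a i j : plucker_rel a -> skewM a i j != 0 ->
  forall l m, skewM a l m = (- skewM a j l / skewM a i j) * skewM a i m
                            - skewM a i l * (- skewM a j m / skewM a i j).
Proof.
move=> Hr Hm l m; have := Pf0 Hr i j l m; rewrite /Pf => E.
have E' : skewM a l m * skewM a i j = skewM a i l * skewM a j m - skewM a i m * skewM a j l.
  from_eq E 1.
rewrite -[LHS](mulfK Hm) E'; field; exact: Hm.
Qed.

Lemma rank_le2 a (c d : 'I_5 -> F) :
  (forall l m, skewM a l m = c l * d m - d l * c m) -> (\rank (skewM a) <= 2)%N.
Proof.
move=> H.
have -> : skewM a = (\matrix_(l < 5, k < 2) (if val k == 0%N then c l else - d l))
    *m (\matrix_(k < 2, m < 5) (if val k == 0%N then d m else c m)).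
  apply/matrixP => l m; rewrite H mxE big_ord_recl big_ord1 !mxE /=; ring.
exact: leq_trans (mxrankM_maxl _ _) (rank_leq_col _).
Qed.

Definition sel2 (i j : 'I_5) : 'I_2 -> 'I_5 := fun k => if val k == 0%N then i else j.

Lemma rank_sel a i j : skewM a i j != 0 -> \rank (rowsub (sel2 i j) (skewM a)) = 2%N.
Proof.
move=> Hm; have Hd := skew_diag a; have Ha := skew_anti a.
move: Hm Hd Ha; move: (skewM a) => M Hm Hd Ha.
apply/eqP; rewrite eqn_leq rank_leq_row /=.
set R := rowsub _ _.
have H2 : \rank (R *m colsub (sel2 i j) 1%:M) = 2%N.
  apply: mxrank_unit.
  set m := M i j.
  apply: (proj1 (@mulmx1_unit _ _ _ (\matrix_(r < 2, k < 2) (if val r == 0%N then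
      (if val k == 0%N then 0 else - m^-1) else (if val k == 0%N then m^-1 else 0))) _)).
  rewrite mulmx_colsub mulmx1.
  apply/matrixP => r k; rewrite mxE big_ord_recl big_ord1 !mxE /sel2 /=.
  case: (ord2P r) => ->; case: (ord2P k) => -> /=; rewrite ?Hd ?(Ha i j) -/m; field; exact: Hm.
by have := mxrankM_maxl R (colsub (sel2 i j) 1%:M); rewrite H2.
Qed.

Lemma rank_ge2 a i j : skewM a i j != 0 -> (2 <= \rank (skewM a))%N.
Proof.
move=> Hm; have := mxrankS (rowsub_sub (sel2 i j) (skewM a)); by rewrite (rank_sel Hm).
Qed.

Lemma rank2_decomp (M : 'M[F]_5) i j : (forall i, M i i = 0) -> (forall i j, M j i = - M i j) ->
  M i j != 0 -> \rank M = 2%N ->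
  forall l m, M l m = (M l j / M i j) * M i m - M i l * (M m j / M i j).
Proof.
move=> Hd Ha Hm Hr l m.
set R := rowsub (sel2 i j) M.
have sub : (R <= M)%MS by exact: rowsub_sub.
have HR : \rank R = 2%N.
  apply/eqP; rewrite eqn_leq rank_leq_row /=.
  have H2 : \rank (R *m colsub (sel2 i j) 1%:M) = 2%N.
    apply: mxrank_unit.
    set mm := M i j.
    apply: (proj1 (@mulmx1_unit _ _ _ (\matrix_(r < 2, k < 2) (if val r == 0%N then
      (if val k == 0%N then 0 else - mm^-1) else (if val k == 0%N then mm^-1 else 0))) _)).
    rewrite mulmx_colsub mulmx1.
    apply/matrixP => r k; rewrite mxE big_ord_recl big_ord1 !mxE /sel2 /=.
    case: (ord2P r) => ->; case: (ord2P k) => -> /=; rewrite ?Hd ?(Ha i j) -/mm; field; exact: Hm.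
  by have := mxrankM_maxl R (colsub (sel2 i j) 1%:M); rewrite H2.
have HMR : (M <= R)%MS by rewrite -(mxrank_leqif_sup sub).2 HR Hr.
have /submxP [D HD] : (row l M <= R)%MS by exact: submx_trans (row_sub l M) HMR.
have E m' : M l m' = D 0 ord0 * M i m' + D 0 (lift ord0 ord0) * M j m'.
  have := congr1 (fun X : 'M[F]_(1,5) => X 0 m') HD; rewrite !mxE big_ord_recl big_ord1 !mxE /sel2 /=.
  by [].
rewrite (E m) (Ha l i) (E i) (E j) !Hd (Ha j m) (Ha i j); field; exact: Hm.
Qed.
End R.


Section Parts.
Variable F : fieldType.
Hypothesis h2 : (2 : F) != 0.
Notation g := (@gmet F).
Notation fz := (@fzero F).

Lemma span_lin n (Ks : 'I_n -> field F) A B x y :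
  Defs.span Ks A -> Defs.span Ks B -> Defs.span Ks (lin2 x A y B).
Proof.
case=> a -> [b ->]; exists (fun k => x * a k + y * b k).
apply: fext => i j z w; rewrite /lin2 /lcomb !mulr_sumr -big_split; apply: eq_bigr => k _ /=; ring.
Qed.

Lemma W_lin n W (Ks : 'I_n -> field F) A B x y :
  is_basis W Ks -> W A -> W B -> W (lin2 x A y B).
Proof. case=> _ Hs /Hs HA /Hs HB; apply/Hs; exact: span_lin. Qed.

Lemma TK0 : to_killing (@fzero F) = @fzero F.
Proof. pw. Qed.

Lemma partB (W1 W2 : field F -> Prop) : free_superint W1 -> free_superint W2 ->
  (forall L, PW W1 L <-> PW W2 L) -> forall K, W1 K -> W2 K.
Proof.
case=> [[K1 d1] [k1 g1]] [[K2 d2] [k2 g2]] HP K HK.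
case: (k1 K HK) => L [[a [b [c [d [e [f EL]]]]]] EK].
set p := Prm a c d e f.
have E1 : to_killing (toS20 p) = lin2 1 K b g by rewrite EK EL; exact: TKg.
have H1 : W1 (to_killing (toS20 p)) by rewrite E1; exact: (W_lin _ _ d1).
have [_ H2] := (HP (toS20 p)).1 (conj (in_S20_toS20 p) H1).
have -> : K = lin2 1 (to_killing (toS20 p)) (-b) g.
  by rewrite E1; apply: fext => i j z w; rewrite /lin2; ring.
exact: (W_lin _ _ d2).
Qed.

Definition o3 (n : nat) : 'I_3 := inord n.
Definition mk3 (x y t : F) : 'I_3 -> F :=
  fun k => if val k == 0%N then x else if val k == 1%N then y else t.

Lemma sum3 (f : 'I_3 -> F) : \sum_(k < 3) f k = f (o3 0) + f (o3 1) + f (o3 2).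
Proof.
rewrite !big_ord_recl big_ord0 addr0 addrA.
congr (f _ + f _ + f _); by apply: val_inj; rewrite /o3 /= inordK.
Qed.

Lemma mk3E x y t : [/\ mk3 x y t (o3 0) = x, mk3 x y t (o3 1) = y & mk3 x y t (o3 2) = t].
Proof. by rewrite /mk3 /o3 /= !inordK. Qed.


Lemma killP K : is_Killing K ->
  exists Azz Azw Aww bz bw c, K = to_killing (@sckt F Azz Azw Aww bz bw c).
Proof. by case=> L [[a [b [c [d [e [f ->]]]]]] ->]; do 6 eexists. Qed.

Lemma TKS20 (K : field F) Azz Azw Aww bz bw c :
  K = to_killing (sckt Azz Azw Aww bz bw c) ->
  to_killing (toS20 (Prm Azz Aww bz bw c)) = lin2 1 K Azw g.
Proof. by move=> ->; exact: TKg. Qed.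

Lemma partA_core (W : field F -> Prop) (Ks : 'I_3 -> field F) k0 k1 k2
  (Hsum : forall f : 'I_3 -> F, \sum_(k < 3) f k = f k0 + f k1 + f k2)
  (Hmk : forall b0 b1 b2, exists a : 'I_3 -> F, [/\ a k0 = b0, a k1 = b1 & a k2 = b2])
  (Hb : is_basis W Ks) (HK : forall K, W K -> is_Killing K) (a : 'I_3 -> F)
  (Hg : g = lcomb Ks a) (Ha : a k0 != 0) : exists p1 p2, PW_basis W p1 p2.
Proof.
have Lc b i j z w : lcomb Ks b i j z w =
    b k0 * Ks k0 i j z w + b k1 * Ks k1 i j z w + b k2 * Ks k2 i j z w.
  by rewrite /lcomb Hsum.
have Hg' i j z w : g i j z w = a k0 * Ks k0 i j z w + a k1 * Ks k1 i j z w + a k2 * Ks k2 i j z w.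
  by rewrite Hg Lc.
have Hb' := Hb; case: Hb' => Hind Hspan.
have Wg : W g by apply/Hspan; exists a.
have WK k : W (Ks k).
  apply/Hspan; exists (fun l => if l == k then 1 else 0); apply: fext=> i j z w.
  rewrite /lcomb (bigD1 k) //= eqxx mul1r big1 ?addr0 // => l /negbTE ->; by rewrite mul0r.
have [A1 [z1 [B1 [bz1 [bw1 [c1 EK1]]]]]] := killP (HK _ (WK k1)).
have [A2 [z2 [B2 [bz2 [bw2 [c2 EK2]]]]]] := killP (HK _ (WK k2)).
set p1 := Prm A1 B1 bz1 bw1 c1; set p2 := Prm A2 B2 bz2 bw2 c2.
have E1 := TKS20 EK1; have E2 := TKS20 EK2; rewrite -/p1 in E1; rewrite -/p2 in E2.
exists p1, p2; split.
- move=> b; rewrite lcomb_pair => Hb0.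
  have HT : lin2 (b ord0) (to_killing (toS20 p1)) (b ord_max) (to_killing (toS20 p2)) = fz.
    by rewrite -TK_lin Hb0 TK0.
  set s := b ord0 * z1 + b ord_max * z2.
  have [c [ck0 ck1 ck2]] := Hmk (s * a k0) (b ord0 + s * a k1) (b ord_max + s * a k2).
  have Hc : lcomb Ks c = fz.
    apply: fext => i j z w; rewrite Lc ck0 ck1 ck2.
    have := congr1 (fun K => K i j z w) HT; rewrite E1 E2 /lin2 /fzero !Hg' => h.
    rewrite /s; from_eq h 1.
  have := Hind c Hc; move=> Hc0.
  have s0 : s = 0.
    by move: (Hc0 k0); rewrite ck0 => /eqP; rewrite mulf_eq0 (negbTE Ha) orbF => /eqP.
  move: (Hc0 k1) (Hc0 k2); rewrite ck1 ck2 s0 !mul0r !addr0 => B0 B1'.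
  by move=> k; case: (ord2P k) => ->.
- move=> L; split.
  + case=> HL HWL; case: (in_S20P HL) => q EL; subst L.
    case/Hspan: HWL => bb Hbb.
    set cc1 := bb k1 - bb k0 * a k1 / a k0; set cc2 := bb k2 - bb k0 * a k2 / a k0.
    set s' := bb k0 / a k0 - cc1 * z1 - cc2 * z2.
    have Cl i j z w : to_killing (toS20 q) i j z w =
        cc1 * to_killing (toS20 p1) i j z w + cc2 * to_killing (toS20 p2) i j z w + s' * g i j z w.
      rewrite Hbb E1 E2 /lin2 !Hg' Lc /s' /cc1 /cc2; field; exact: Ha.
    have s0 : s' = 0.
      by move: (Cl iz iw 0 0); rewrite !TKS20_zw gmet_zw !mulr0 !add0r mulr1 => <-.
    have : toS20 q = lin2 cc1 (toS20 p1) cc2 (toS20 p2).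
      apply: TK_inj; rewrite TK_lin; apply: fext => i j z w; rewrite Cl s0 mul0r addr0 /lin2 //.
    by move=> ->; exists (mk2 cc1 cc2); rewrite lcomb_mk2.
  + case=> bb ->; rewrite lcomb_pair; split.
      by rewrite toS20_comb; exact: in_S20_toS20.
    rewrite TK_lin E1 E2; apply: (W_lin _ _ Hb); apply: (W_lin _ _ Hb) => //; exact: WK.
Qed.

Lemma partA (W : field F -> Prop) : free_superint W -> exists p1 p2, PW_basis W p1 p2.
Proof.
case=> [[Ks Hb] [HK Wg]].
have Hb' := Hb; case: Hb' => _ Hspan.
case/Hspan: Wg => a Hg.
case: (eqVneq (a (o3 0)) 0) => a0; last first.
  apply: (@partA_core W Ks (o3 0) (o3 1) (o3 2) _ _ Hb HK a Hg a0).
    by move=> f; rewrite sum3.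
  by move=> b0 b1 b2; exists (mk3 b0 b1 b2); case: (mk3E b0 b1 b2).
case: (eqVneq (a (o3 1)) 0) => a1; last first.
  apply: (@partA_core W Ks (o3 1) (o3 0) (o3 2) _ _ Hb HK a Hg a1).
    by move=> f; rewrite sum3; ring.
  by move=> b0 b1 b2; exists (mk3 b1 b0 b2); case: (mk3E b1 b0 b2).
case: (eqVneq (a (o3 2)) 0) => a2; last first.
  apply: (@partA_core W Ks (o3 2) (o3 0) (o3 1) _ _ Hb HK a Hg a2).
    by move=> f; rewrite sum3; ring.
  by move=> b0 b1 b2; exists (mk3 b1 b2 b0); case: (mk3E b1 b2 b0).
exfalso; have := congr1 (fun K => K iz iw 0 0) Hg.
by rewrite gmet_zw /lcomb sum3 a0 a1 a2 !mul0r !addr0 => /eqP; rewrite oner_eq0.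
Qed.

Lemma partA' (W : field F -> Prop) : free_superint W -> plane_in_S20 (PW W).
Proof.
move=> /partA [p1 [p2 Hb]]; split; first by exists (pair_fam (toS20 p1) (toS20 p2)).
by move=> L [].
Qed.

Lemma lcomb3 (Ks : 'I_3 -> field F) b i j z w : lcomb Ks b i j z w =
  b (o3 0) * Ks (o3 0) i j z w + b (o3 1) * Ks (o3 1) i j z w + b (o3 2) * Ks (o3 2) i j z w.
Proof. by rewrite /lcomb sum3. Qed.

Lemma partC (P : field F -> Prop) : plane_in_S20 P ->
  exists2 W, free_superint W & (forall L, P L <-> PW W L).
Proof.
case=> [[Ks [Hind Hspan]] HS].
have Lc2 b : lcomb Ks b = lin2 (b ord0) (Ks ord0) (b ord_max) (Ks ord_max).
  by apply: fext => i j z w; rewrite lcomb2E.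
have PK k : P (Ks k).
  apply/Hspan; exists (fun l => if l == k then 1 else 0); apply: fext=> i j z w.
  rewrite /lcomb (bigD1 k) //= eqxx mul1r big1 ?addr0 // => l /negbTE ->; by rewrite mul0r.
case: (in_S20P (HS _ (PK ord0))) => q1 E1.
case: (in_S20P (HS _ (PK ord_max))) => q2 E2.
set Ks3 := fun k : 'I_3 => if val k == 0%N then to_killing (Ks ord0)
                          else if val k == 1%N then to_killing (Ks ord_max) else g.
have K3 : [/\ Ks3 (o3 0) = to_killing (Ks ord0), Ks3 (o3 1) = to_killing (Ks ord_max) & Ks3 (o3 2) = g].
  by rewrite /Ks3 /o3 /= !inordK.
case: K3 => K30 K31 K32.
have Lc3 b i j z w : lcomb Ks3 b i j z w = b (o3 0) * to_killing (Ks ord0) i j z w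
    + b (o3 1) * to_killing (Ks ord_max) i j z w + b (o3 2) * g i j z w.
  by rewrite lcomb3 K30 K31 K32.
exists (Defs.span Ks3).
- split; [exists Ks3; split => // | split].
  + move=> b Hb.
    have b2 : b (o3 2) = 0.
      have := congr1 (fun K => K iz iw 0 0) Hb; rewrite Lc3 E1 E2 !TKS20_zw gmet_zw.
      by rewrite !mulr0 !add0r mulr1.
    have H2 : lcomb Ks (mk2 (b (o3 0)) (b (o3 1))) = fz.
      rewrite Lc2 /=; apply: TK_inj; rewrite TK_lin TK0; apply: fext => i j z w.
      have := congr1 (fun K => K i j z w) Hb; rewrite Lc3 b2 mul0r addr0 /lin2 //.
    have := Hind _ H2 ord0; have := Hind _ H2 ord_max; rewrite /mk2 /= => B1 B0.
    case=> [[|[|[|//]]] Hk].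
    * by rewrite -B0; congr b; apply: val_inj; rewrite /= inordK.
    * by rewrite -B1; congr b; apply: val_inj; rewrite /= inordK.
    * by rewrite -b2; congr b; apply: val_inj; rewrite /= inordK.
  + move=> K [b ->].
    exists (sckt (b (o3 0) * pAzz q1 + b (o3 1) * pAzz q2) (- b (o3 2))
                 (b (o3 0) * pAww q1 + b (o3 1) * pAww q2) (b (o3 0) * pbz q1 + b (o3 1) * pbz q2)
                 (b (o3 0) * pbw q1 + b (o3 1) * pbw q2) (b (o3 0) * pc q1 + b (o3 1) * pc q2)).
    split; first by do 6 eexists.
    apply: fext => i j z w; rewrite Lc3 E1 E2.
    case: (ord2P i) => ->; case: (ord2P j) => ->;
    rewrite /lin2 /to_killing ?traceE /toS20 /sckt /gmet /=; ring.
  + exists (mk3 0 0 1); apply: fext => i j z w; rewrite Lc3; case: (mk3E 0 0 1) => -> -> ->; ring.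
- move=> L; split.
  + move=> HPL; split; first exact: HS.
    case/Hspan: HPL => b ->; exists (mk3 (b ord0) (b ord_max) 0).
    apply: fext => i j z w; rewrite Lc3 Lc2 TK_lin; case: (mk3E (b ord0) (b ord_max) 0) => -> -> ->.
    rewrite /lin2; ring.
  + case=> HL [b Hb].
    case: (in_S20P HL) => q EL.
    have b2 : b (o3 2) = 0.
      have := congr1 (fun K => K iz iw 0 0) Hb; rewrite Lc3 E1 E2 EL !TKS20_zw gmet_zw.
      by rewrite !mulr0 !add0r mulr1.
    apply/Hspan; exists (mk2 (b (o3 0)) (b (o3 1))); rewrite Lc2 /=.
    apply: TK_inj; rewrite TK_lin; apply: fext => i j z w.
    by rewrite Hb Lc3 b2 mul0r addr0 /lin2.
Qed.

Lemma pl_ofE (p : prm F) (q1 q2 : prm F) W :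
  PW_basis W q1 q2 -> PW W (toS20 p) -> exists x y, p = pcomb x q1 y q2.
Proof.
case=> _ Hs /Hs [c]; rewrite lcomb_pair toS20_comb => /toS20_inj ->.
by do 2 eexists.
Qed.

Lemma PW_of_basis (W : field F -> Prop) p1 p2 : PW_basis W p1 p2 ->
  PW W (toS20 p1) /\ PW W (toS20 p2).
Proof.
case=> _ Hs; split; apply/Hs.
- exists (mk2 1 0); rewrite lcomb_mk2; apply: fext => i j z w; rewrite /lin2; ring.
- exists (mk2 0 1); rewrite lcomb_mk2; apply: fext => i j z w; rewrite /lin2; ring.
Qed.

Lemma partD (W : field F -> Prop) p1 p2 q1 q2 : PW_basis W p1 p2 -> PW_basis W q1 q2 ->
  pl_nonzero (plucker p1 p2) /\ pl_proj_eq (plucker p1 p2) (plucker q1 q2).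
Proof.
move=> Hp Hq.
have nz : pl_nonzero (plucker p1 p2) by apply: (pl_of_indep h2); case: Hp.
split => //.
case: (PW_of_basis Hp) => /(pl_ofE Hq) [x1 [y1 Ep1]] /(pl_ofE Hq) [x2 [y2 Ep2]].
exists (x1 * y2 - y1 * x2).
  apply/eqP => k0; case/pl_nonzeroP: nz => i [j].
  rewrite skewM_pl Ep1 Ep2 !vec_comb.
  have -> : (x1 * vec q1 i + y1 * vec q2 i) * (x2 * vec q1 j + y2 * vec q2 j) -
    (x1 * vec q1 j + y1 * vec q2 j) * (x2 * vec q1 i + y2 * vec q2 i) =
    (x1 * y2 - y1 * x2) * (vec q1 i * vec q2 j - vec q1 j * vec q2 i) by ring.
  by rewrite k0 mul0r eqxx.
rewrite Ep1 Ep2 /plucker /pl_coords /=.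
congr [:: _; _; _; _; _; _; _; _; _; _]; ring.
Qed.

Lemma pl_proj_sym (a b : pl F) : pl_proj_eq a b -> pl_proj_eq b a.
Proof.
case=> k Hk; case: a => a1 a2 a3 a4 a5 a6 a7 a8 a9 a10; case: b => b1 b2 b3 b4 b5 b6 b7 b8 b9 b10.
rewrite /pl_coords /= => [[-> -> -> -> -> -> -> -> -> ->]].
exists k^-1; first by rewrite invr_eq0.
by rewrite /= !mulKf.
Qed.

Lemma span_sub (p1 p2 q1 q2 : prm F) : pl_nonzero (plucker p1 p2) ->
  pl_proj_eq (plucker p1 p2) (plucker q1 q2) ->
  forall L, Defs.span (pair_fam (toS20 q1) (toS20 q2)) L ->
            Defs.span (pair_fam (toS20 p1) (toS20 p2)) L.
Proof.
case/pl_nonzeroP => i [j]; rewrite skewM_pl => Hm [k _ Hk].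
have Hm' l m : vec p1 l * vec p2 m - vec p1 m * vec p2 l =
               k * (vec q1 l * vec q2 m - vec q1 m * vec q2 l).
  by rewrite -!skewM_pl; apply: skewM_proj.
have Hx (q : prm F) : (q = q1 \/ q = q2) -> exists x y, q = pcomb x p1 y p2.
  move=> Hq; do 2 eexists; apply: (vec_inj h2) => l; rewrite vec_comb.
  apply: (Lspan Hm) => l'; rewrite !Hm'.
  by case: Hq => ->; ring.
have [x1 [y1 E1]] := Hx q1 (or_introl erefl).
have [x2 [y2 E2]] := Hx q2 (or_intror erefl).
move=> L [c ->]; rewrite lcomb_pair toS20_comb E1 E2.
exists (mk2 (c ord0 * x1 + c ord_max * x2) (c ord0 * y1 + c ord_max * y2)).
rewrite lcomb_mk2 toS20_comb; congr toS20.
apply: (vec_inj h2) => l; rewrite !vec_comb; ring.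
Qed.

Lemma partE (W1 W2 : field F -> Prop) p1 p2 q1 q2 : free_superint W1 -> free_superint W2 ->
  PW_basis W1 p1 p2 -> PW_basis W2 q1 q2 ->
  pl_proj_eq (plucker p1 p2) (plucker q1 q2) -> forall K, W1 K <-> W2 K.
Proof.
move=> f1 f2 Hp Hq He.
have nzp : pl_nonzero (plucker p1 p2) by apply: (pl_of_indep h2); case: Hp.
have nzq : pl_nonzero (plucker q1 q2) by apply: (pl_of_indep h2); case: Hq.
have HP : forall L, PW W1 L <-> PW W2 L.
  move=> L; case: Hp => _ Hp; case: Hq => _ Hq; rewrite Hp Hq; split.
  - exact: (span_sub nzq (pl_proj_sym He)).
  - exact: (span_sub nzp He).
move=> K; split; first exact: partB.
apply: partB => // L; split; by move/HP.
Qed.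
End Parts.


Section PF.
Variable F : fieldType.
Hypothesis h2 : (2 : F) != 0.

Lemma partF (a : pl F) : pl_nonzero a ->
     (plucker_rel a <-> \rank (skewM a) = 2%N) /\
     (plucker_rel a <-> exists (W : field F -> Prop) p1 p2, [/\ free_superint W, PW_basis W p1 p2 &
                                         pl_proj_eq (plucker p1 p2) a]).
Proof.
move=> nz; have := nz; case/pl_nonzeroP => i [j Hm].
split; split.
- move=> Hr; apply/eqP; rewrite eqn_leq (rank_ge2 Hm) andbT.
  exact: (rank_le2 (c := fun l => - skewM a j l / skewM a i j) (d := fun m => skewM a i m) (decomp Hr Hm)).
- move=> Hr; apply: (rel_of_decomp (c := fun l => skewM a l j / skewM a i j) (d := fun m => skewM a i m)).
  exact: rank2_decomp (@skew_diag F a) (@skew_anti F a) Hm Hr.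
- move=> Hr; have D := decomp Hr Hm.
  set c := fun l => - skewM a j l / skewM a i j; set d := fun m => skewM a i m.
  set p1 := prm_of c; set p2 := prm_of d.
  have HM l m : skewM (plucker p1 p2) l m = skewM a l m.
    by rewrite skewM_pl !(vec_prm_of h2) D /c /d; ring.
  have nz12 : pl_nonzero (plucker p1 p2) by apply/pl_nonzeroP; exists i, j; rewrite HM.
  have Hpl : plane_in_S20 (Defs.span (pair_fam (toS20 p1) (toS20 p2))).
    split; first (exists (pair_fam (toS20 p1) (toS20 p2)); split; [exact: (indep_of_pl nz12) | by move=> K]).

    by move=> L [c' ->]; rewrite lcomb_pair toS20_comb; exact: in_S20_toS20.
  have [W fW HW] := partC Hpl.
  exists W, p1, p2; split => //.
    split; first exact: (indep_of_pl nz12).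
    by move=> L; split => /HW.
  exists 1; first exact: oner_neq0.
  by rewrite (coords_skew (plucker p1 p2)) (coords_skew a) !HM /= !mul1r.
- case=> W [p1 [p2 [_ _ He]]].
  case: (pl_proj_sym He) => k _ Hk.
  apply: (rel_of_decomp (c := fun l => k * vec p1 l) (d := fun m => vec p2 m)) => l m.
  rewrite (skewM_proj Hk) skewM_pl; ring.
Qed.
End PF.

Theorem proposition2p8 (R : realType) :
  (* W |-> P_W maps F into G_2(S^2_0) ... *)
  (forall W : field R[i] -> Prop, free_superint W -> plane_in_S20 (PW W)) /\
  (* ... injectively ... *)
  (forall W1 W2 : field R[i] -> Prop, free_superint W1 -> free_superint W2 ->
     (forall L, PW W1 L <-> PW W2 L) -> (forall K, W1 K <-> W2 K)) /\
  (* ... and surjectively. *)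
  (forall P : field R[i] -> Prop, plane_in_S20 P ->
     exists2 W, free_superint W & (forall L, P L <-> PW W L)) /\
  (* The Plücker point of P_W is a well-defined point of P^9 ... *)
  (forall (W : field R[i] -> Prop) p1 p2 q1 q2, free_superint W ->
     PW_basis W p1 p2 -> PW_basis W q1 q2 ->
     pl_nonzero (plucker p1 p2) /\ pl_proj_eq (plucker p1 p2) (plucker q1 q2)) /\
  (* ... the composite map F -> P^9 is injective ... *)
  (forall (W1 W2 : field R[i] -> Prop) p1 p2 q1 q2, free_superint W1 -> free_superint W2 ->
     PW_basis W1 p1 p2 -> PW_basis W2 q1 q2 ->
     pl_proj_eq (plucker p1 p2) (plucker q1 q2) -> (forall K, W1 K <-> W2 K)) /\
  (* ... and its image is the locus of rank-2 skew matrices = Plücker relations. *)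
  (forall a : pl R[i], pl_nonzero a ->
     (plucker_rel a <-> \rank (skewM a) = 2%N) /\
     (plucker_rel a <-> exists (W : field R[i] -> Prop) p1 p2, [/\ free_superint W, PW_basis W p1 p2 &
                                         pl_proj_eq (plucker p1 p2) a])).

Proof.
have h2 : (2 : R[i]) != 0 by rewrite pnatr_eq0.
split; first exact: partA'.
split.
  move=> W1 W2 f1 f2 HP K; split; first exact: partB.
  by apply: partB => // L; split => /HP.
split; first exact: partC.
split; first by move=> W p1 p2 q1 q2 _ Hp Hq; exact: (partD h2 Hp Hq).
split; first by move=> W1 W2 p1 p2 q1 q2 f1 f2 Hp Hq He; exact: (partE h2 f1 f2 Hp Hq He).
by move=> a nz; exact: (partF h2 nz).
Qed.
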